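(* For every $\lambda>\lambda^*$, $\partial_eF(\lambda,e(\lambda))>0$.
   Context: Standing setup. Let $\gamma>0$; let $a_1,\dots,a_p>0$ with weights $\omega_i>0$, $\sum_i\omega_i=1$, and $b_1,\dots,b_n>0$ with weights $\pi_j>0$, $\sum_j\pi_j=1$. Let $\mu$ be the limiting spectral distribution of $\mathbf{N}\mathbf{N}^T$ where $\mathbf{N}=\mathbf{A}^{1/2}\mathbf{G}\mathbf{B}^{1/2}$ is $k\times l$, $\mathbf{G}$ has iid mean-zero entries of variance $1/l$, $k/l\to\gamma$, and the spectral distributions of $\mathbf{A},\mathbf{B}$ converge to $\nu=\sum_i\omega_i\delta_{a_i}$ and $\underline{\nu}=\sum_j\pi_j\delta_{b_j}$. $\mu$ is a compactly supported probability measure on $[0,\infty)$; $\lambda^*>0$ is the right endpoint of its support, and $s(\lambda)=\int\frac{d\mu(t)}{t-\lambda}$ for $\lambda>\lambda^*$. Define $G(e)=\sum_{j=1}^n\frac{b_j\pi_j}{1+\gamma b_j e}$ and $F(\lambda,e)=e-\sum_{i=1}^p\frac{a_i\omega_i}{a_iG(e)-\lambda}$. It is known (master equations) that there is a smooth real function $e(\lambda)$ on $(\lambda^*,\infty)$, never equal to a pole $-1/(\gamma b_j)$ of $G$ and with $a_iG(e(\lambda))\ne\lambda$, satisfying $s(\lambda)=\sum_{i=1}^p\frac{\omega_i}{a_iG(e(\lambda))-\lambda}$ and $F(\lambda,e(\lambda))=0$. *)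

(* Defs.v *)
From Stdlib Require Import Reals Lra.
Open Scope R_scope.

Fixpoint rsum (n : nat) (f : nat -> R) : R :=
  match n with
  | O => 0
  | S k => rsum k f + f k
  end.

Definition Gfun (gamma : R) (n : nat) (b pi : nat -> R) (e : R) : R :=
  rsum n (fun j => b j * pi j / (1 + gamma * b j * e)).

Definition Ffun (gamma : R) (p : nat) (a om : nat -> R) (n : nat) (b pi : nat -> R)
  (lam e : R) : R :=
  e - rsum p (fun i => a i * om i / (a i * Gfun gamma n b pi e - lam)).

Definition cont_on (lo hi : R) (f : R -> R) : Prop :=
  forall t, lo <= t <= hi -> continuity_pt f t.

(* I is (the integration functional of) a probability measure on [lo,hi]:
   a positive, normalised linear functional on C([lo,hi]) depending only on
   values on [lo,hi] (Riesz representation). *)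
Definition prob_functional (lo hi : R) (I : (R -> R) -> R) : Prop :=
  (forall f g, (forall t, lo <= t <= hi -> f t = g t) -> I f = I g) /\
  (forall f g c, cont_on lo hi f -> cont_on lo hi g ->
      I (fun t => f t + c * g t) = I f + c * I g) /\
  (forall f, cont_on lo hi f -> (forall t, lo <= t <= hi -> 0 <= f t) -> 0 <= I f) /\
  I (fun _ => 1) = 1.

Definition in_support (lo hi : R) (I : (R -> R) -> R) (x : R) : Prop :=
  forall eps, 0 < eps ->
    exists f, cont_on lo hi f /\
      (forall t, lo <= t <= hi -> 0 <= f t) /\
      (forall t, lo <= t <= hi -> eps <= Rabs (t - x) -> f t = 0) /\
      0 < I f.

Definition stieltjes (I : (R -> R) -> R) (lam : R) : R :=
  I (fun t => / (t - lam)).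

Definition smooth_on (lo : R) (e : R -> R) : Prop :=
  exists d : nat -> R -> R,
    (forall x, lo < x -> d O x = e x) /\
    (forall k x, lo < x -> derivable_pt_lim (d k) x (d (S k) x)).

(* Main.v *)
Require Import Defs.
From Stdlib Require Import Reals Lra Lia.
From Coquelicot Require Import Coquelicot.
Open Scope R_scope.

Lemma rsum_ext m f g : (forall k, (k<m)%nat -> f k = g k) -> rsum m f = rsum m g.
Proof. induction m; simpl; auto. intros H. rewrite IHm by (intros; apply H; lia). rewrite H by lia; auto. Qed.
Lemma rsum_plus m f g : rsum m (fun k => f k + g k) = rsum m f + rsum m g.
Proof. induction m; simpl; [lra| rewrite IHm; lra]. Qed.
Lemma rsum_scal m c f : rsum m (fun k => c * f k) = c * rsum m f.
Proof. induction m; simpl; [ring| rewrite IHm; ring]. Qed.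
Lemma rsum_pos m f : (0<m)%nat -> (forall k, (k<m)%nat -> 0 < f k) -> 0 < rsum m f.
Proof. induction m; intros H H0; [lia|]. simpl. destruct m.
 - simpl. specialize (H0 0%nat). assert (0 < f 0%nat) by (apply H0; lia). lra.
 - assert (0 < rsum (S m) f) by (apply IHm; intros; [lia| apply H0; lia]). assert (0 < f (S m)) by (apply H0; lia). lra.
Qed.

Lemma is_derive_eq (f : R -> R) x l l' : is_derive f x l -> l = l' -> is_derive f x l'.
Proof. intros H ->; exact H. Qed.

Lemma rsum_derive m (f:nat->R->R) df x : (forall k, (k<m)%nat -> is_derive (f k) x (df k)) ->
  is_derive (fun y => rsum m (fun k => f k y)) x (rsum m df).
Proof. induction m; simpl; intros H.
 - eapply is_derive_eq. apply (@is_derive_const R_AbsRing R_NormedModule 0). reflexivity.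
 - apply (is_derive_plus (fun y => rsum m (fun k => f k y)) (f m)); auto.
Qed.

Lemma is_derive_cdiv c (u : R -> R) x du : is_derive u x du -> u x <> 0 ->
  is_derive (fun y => c / u y) x (- c * du / (u x)^2).
Proof. intros H H0.
 assert (Hc : is_derive (fun _ : R => c) x 0).
 { eapply is_derive_eq. apply (@is_derive_const R_AbsRing R_NormedModule c). reflexivity. }
 pose proof (is_derive_div (fun _ => c) u x 0 du Hc H H0) as H1.
 eapply is_derive_eq. exact H1. simpl. field. auto.
Qed.

Definition Gd (gamma : R) (n : nat) (b pi : nat -> R) (x : R) : R :=
  rsum n (fun j => - (b j * pi j) * (gamma * b j) / (1 + gamma * b j * x)^2).

Lemma G_deriv gamma n b pi x : (forall j, (j<n)%nat -> 1 + gamma * b j * x <> 0) ->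
  is_derive (Gfun gamma n b pi) x (Gd gamma n b pi x).
Proof. intros H. unfold Gfun, Gd. apply (rsum_derive n (fun j y => b j * pi j / (1 + gamma * b j * y))).
 intros k Hk. apply (is_derive_cdiv _ (fun y => 1 + gamma * b k * y)); auto.
 auto_derive; auto. ring.
Qed.

Lemma cont_of_deriv (f : R -> R) lo hi : (forall t, lo<=t<=hi -> ex_derive f t) -> cont_on lo hi f.
Proof. intros H t Ht. apply continuity_pt_filterlim. apply (@ex_derive_continuous R_AbsRing R_NormedModule). auto. Qed.

Section PF.
Variables (lo hi : R) (I : (R -> R) -> R).
Hypothesis HI : prob_functional lo hi I.
Lemma I_ext f g : (forall t, lo <= t <= hi -> f t = g t) -> I f = I g.
Proof. apply HI. Qed.
Lemma cont_const c : cont_on lo hi (fun _ => c).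
Proof. apply cont_of_deriv. intros. auto_derive. auto. Qed.
Lemma I_zero : I (fun _ => 0) = 0.
Proof. destruct HI as [Hx [Hl _]].
 assert (H := Hl (fun _ => 0) (fun _ => 0) 1 (cont_const 0) (cont_const 0)).
 cbv beta in H. rewrite (Hx (fun t => 0 + 1 * 0) (fun _ => 0)) in H by (intros; ring). lra. Qed.
Lemma I_lin2 f g al be : cont_on lo hi f -> cont_on lo hi g ->
  I (fun t => al * f t + be * g t) = al * I f + be * I g.
Proof. intros Hf Hg. destruct HI as [Hx [Hl _]].
 assert (Hs : forall h c, cont_on lo hi h -> I (fun t => c * h t) = c * I h).
 { intros h c Hh. rewrite (Hx _ (fun t => 0 + c * h t)) by (intros; ring).
   rewrite Hl by (auto; apply cont_const). rewrite I_zero. ring. }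
 rewrite Hl; [| |auto].
 - rewrite Hs; auto.
 - intros t Ht. apply continuity_pt_scal. apply Hf; auto.
Qed.
Lemma I_pos f : cont_on lo hi f -> (forall t, lo <= t <= hi -> 0 <= f t) -> 0 <= I f.
Proof. apply HI. Qed.
Lemma I_one : I (fun _ => 1) = 1.
Proof. apply HI. Qed.
End PF.

Lemma sq_pos x : x <> 0 -> 0 < x^2.
Proof. intros H. simpl. rewrite Rmult_1_r. apply (Rsqr_pos_lt x H). Qed.

Theorem proposition3p11
  (gamma : R) (p : nat) (a om : nat -> R) (n : nat) (b pi : nat -> R)
  (I : (R -> R) -> R) (lamstar : R) (e : R -> R)
  (Hgamma : 0 < gamma)
  (Ha : forall i, (i < p)%nat -> 0 < a i)
  (Hom : forall i, (i < p)%nat -> 0 < om i)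
  (Homsum : rsum p om = 1)
  (Hb : forall j, (j < n)%nat -> 0 < b j)
  (Hpi : forall j, (j < n)%nat -> 0 < pi j)
  (Hpisum : rsum n pi = 1)
  (Hlamstar : 0 < lamstar)
  (Hmu : prob_functional 0 lamstar I)
  (Hend : in_support 0 lamstar I lamstar)
  (Hsmooth : smooth_on lamstar e)
  (Hpole : forall lam, lamstar < lam ->
     forall j, (j < n)%nat -> e lam <> - / (gamma * b j))
  (Hden : forall lam, lamstar < lam ->
     forall i, (i < p)%nat -> a i * Gfun gamma n b pi (e lam) <> lam)
  (Hs : forall lam, lamstar < lam ->
     stieltjes I lam =
       rsum p (fun i => om i / (a i * Gfun gamma n b pi (e lam) - lam)))
  (HF : forall lam, lamstar < lam -> Ffun gamma p a om n b pi lam (e lam) = 0) :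
  forall lam, lamstar < lam ->
    exists d, derivable_pt_lim (fun x => Ffun gamma p a om n b pi lam x) (e lam) d
              /\ 0 < d.
Proof.
intros lam Hl.
assert (Hn : (0 < n)%nat) by (destruct n; [simpl in Hpisum; lra | lia]).
assert (Hp : (0 < p)%nat) by (destruct p; [simpl in Homsum; lra | lia]).
assert (Hloc : locally lam (fun t => lamstar < t)) by (apply open_gt; exact Hl).
destruct Hsmooth as [dd [Hd0 Hd1]].
set (e1 := dd 1%nat lam).
assert (He : is_derive e lam e1).
{ apply is_derive_ext_loc with (f := dd 0%nat).
  - eapply filter_imp; [|exact Hloc]. intros t Ht. apply Hd0; exact Ht.
  - apply is_derive_Reals. apply Hd1. exact Hl. }
set (E := e lam).
assert (Hc : forall j, (j<n)%nat -> 1 + gamma * b j * E <> 0).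
{ intros j Hj Hz. apply (Hpole lam Hl j Hj). fold E.
  assert (0 < b j) by auto.
  assert (gamma * b j <> 0) by (apply Rgt_not_eq; apply Rmult_lt_0_compat; lra).
  assert (gamma <> 0) by lra. assert (b j <> 0) by lra.
  replace E with ((1 + gamma*b j*E - 1)/(gamma*b j)) by (field; auto).
  rewrite Hz. field; auto. }
set (G := Gfun gamma n b pi).
assert (HG : is_derive G E (Gd gamma n b pi E)) by (apply G_deriv; auto).
set (g1 := Gd gamma n b pi E).
assert (HX : is_derive (fun t => G (e t)) lam (e1 * g1)).
{ eapply is_derive_eq. apply (is_derive_comp G e lam g1 e1); auto. reflexivity. }
set (P := rsum n (fun j => b j * pi j / (1 + gamma*b j*E)^2)).
assert (HPpos : 0 < P).
{ apply rsum_pos; auto. intros j Hj. apply Rdiv_lt_0_compat.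
  apply Rmult_lt_0_compat; auto. apply sq_pos; auto. }
assert (Hid : g1 * E + G E = P).
{ unfold g1, Gd, G, Gfun, P. rewrite Rmult_comm, <- rsum_scal, <- rsum_plus.
  apply rsum_ext. intros j Hj. field. auto. }
assert (Hpsi : is_derive (fun t => G (e t) * e t) lam (e1 * P)).
{ eapply is_derive_eq. apply (is_derive_mult (fun t => G (e t)) e lam (e1*g1) e1); auto.
  intros; apply Rmult_comm.
  rewrite <- Hid. unfold plus, mult; simpl. fold E. ring. }
assert (Hequal : forall mu, lamstar < mu -> G (e mu) * e mu = I (fun s => s/(s-mu))).
{ intros mu Hmu0.
  pose proof (HF mu Hmu0) as HFm. pose proof (Hs mu Hmu0) as Hsm.
  unfold Ffun in HFm; unfold stieltjes in Hsm.
  assert (Hem : e mu = rsum p (fun i => a i*om i/(a i * G (e mu) - mu))) by (unfold G; lra).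
  transitivity (G (e mu) * rsum p (fun i => a i*om i/(a i * G (e mu) - mu))).
  { rewrite <- Hem. reflexivity. }
  rewrite <- rsum_scal.
  transitivity (rsum p om + mu * I (fun s => / (s - mu))).
  { rewrite Hsm, <- rsum_scal, <- rsum_plus. apply rsum_ext. intros i Hi.
    assert (a i * G (e mu) - mu <> 0) by (intro Hz; apply (Hden mu Hmu0 i Hi); unfold G in Hz; lra).
    cbv beta. unfold G in *. field. auto. }
  rewrite (I_ext 0 lamstar I Hmu (fun s => s/(s-mu)) (fun s => 1 * 1 + mu * /(s - mu))).
  2: { intros s Hs'. field. lra. }
  rewrite (I_lin2 0 lamstar I Hmu (fun _ => 1) (fun s => /(s-mu)) 1 mu).
  - rewrite (I_one 0 lamstar I Hmu), Homsum. ring.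
  - apply cont_const; auto.
  - apply cont_of_deriv. intros t Ht. auto_derive. lra. }
set (phi := fun mu => I (fun s => s/(s-mu))).
assert (Hphi : is_derive phi lam (e1 * P)).
{ apply is_derive_ext_loc with (f := fun t => G (e t) * e t); auto.
  eapply filter_imp; [|exact Hloc]. intros t Ht. apply Hequal; exact Ht. }
set (k := I (fun s => s)).
assert (Hk : 0 < k).
{ destruct (Hend (lamstar/2)) as [f [Hfc [Hf0 [Hfz HfI]]]]. lra.
  destruct (continuity_ab_maj f 0 lamstar) as [Mx [HM HMx]]; [lra| exact Hfc|].
  assert (HfM : 0 <= f Mx) by (apply Hf0; auto).
  set (K := 2*(f Mx + 1)/lamstar).
  assert (HK : 0 < K) by (unfold K; apply Rdiv_lt_0_compat; lra).
  assert (HK2 : K * (lamstar/2) = f Mx + 1) by (unfold K; field; lra).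
  assert (Hpos : 0 <= I (fun s => K * s + (-1) * f s)).
  { apply (I_pos 0 lamstar I Hmu).
    - intros t Ht. apply continuity_pt_plus.
      + apply (cont_of_deriv (fun s => K*s) 0 lamstar); [intros; auto_derive; auto | auto].
      + apply continuity_pt_scal. apply Hfc; auto.
    - intros t Ht. destruct (Rle_lt_dec (lamstar/2) (Rabs (t - lamstar))) as [Hr|Hr].
      + rewrite Hfz; auto. nra.
      + apply Rabs_def2 in Hr. assert (f t <= f Mx) by (apply HM; auto). nra. }
  rewrite (I_lin2 0 lamstar I Hmu (fun s => s) f K (-1)) in Hpos.
  - fold k in Hpos. nra.
  - apply cont_of_deriv. intros; auto_derive; auto.
  - exact Hfc. }
set (m := k / (lam+1)^2).
assert (Hm : 0 < m) by (unfold m; apply Rdiv_lt_0_compat; [auto| apply sq_pos; lra]).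
assert (Hdiff : forall h, 0 < h <= 1 -> phi (lam + h) - phi lam >= h * m).
{ intros h Hh. unfold phi, m.
  set (mu := lam + h).
  set (c := h / (lam+1)^2).
  assert (Hcont1 : forall x, lamstar < x -> cont_on 0 lamstar (fun s => s/(s-x))).
  { intros x Hx. apply cont_of_deriv. intros t Ht. auto_derive. lra. }
  assert (Hpos : 0 <= I (fun s => 1 * (s/(s-mu)) + (-1) * (s/(s-lam) + c * s))).
  { apply (I_pos 0 lamstar I Hmu).
    - apply cont_of_deriv. intros t Ht. auto_derive. unfold mu; split; [lra|split;[lra|trivial]].
    - intros t Ht.
      assert (Hl1 : (lam+1)^2 > 0) by (apply sq_pos; lra).
      replace (1 * (t/(t-mu)) + (-1) * (t/(t-lam) + c * t))
        with (t*h*((lam+1)^2 - (mu-t)*(lam-t)) * / ((mu-t)*(lam-t)*(lam+1)^2))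
        by (unfold c, mu; field; lra).
      apply Rmult_le_pos.
      + unfold mu. apply Rmult_le_pos; [nra|]. nra.
      + apply Rlt_le, Rinv_0_lt_compat. unfold mu. apply Rmult_lt_0_compat; [nra|lra]. }
  rewrite (I_lin2 0 lamstar I Hmu (fun s => s/(s-mu)) (fun s => s/(s-lam) + c * s) 1 (-1)) in Hpos.
  - rewrite (I_ext 0 lamstar I Hmu (fun s => s/(s-lam) + c * s) (fun s => 1 * (s/(s-lam)) + c * s)) in Hpos by (intros; ring).
    rewrite (I_lin2 0 lamstar I Hmu (fun s => s/(s-lam)) (fun s => s) 1 c) in Hpos.
    + fold k in Hpos. unfold c in Hpos. replace (h * (k / (lam+1)^2)) with (h / (lam+1)^2 * k) by (field; lra). lra.
    + apply Hcont1; lra.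
    + apply cont_of_deriv. intros; auto_derive; auto.
  - apply Hcont1; unfold mu; lra.
  - apply cont_of_deriv. intros t Ht. auto_derive. lra. }
assert (HD : m <= e1 * P).
{ apply Rnot_lt_le. intro Hlt.
  apply is_derive_Reals in Hphi.
  destruct (Hphi (m - e1*P)) as [delta Hdelta]; [lra|].
  set (h := Rmin (delta/2) 1).
  assert (Hh0 : 0 < h) by (unfold h; apply Rmin_pos; [destruct delta; simpl; lra| lra]).
  assert (Hh1 : h <= 1) by (unfold h; apply Rmin_r).
  assert (Hh2 : h <= delta/2) by (unfold h; apply Rmin_l).
  assert (Hdel : 0 < delta) by (destruct delta; simpl; lra).
  specialize (Hdelta h). 
  assert (Hq := Hdiff h (conj Hh0 Hh1)).
  assert (Hq2 : (phi (lam + h) - phi lam) / h >= m).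
  { apply Rle_ge. apply (Rmult_le_reg_r h); auto. unfold Rdiv. rewrite Rmult_assoc, Rinv_l by lra. lra. }
  assert (Habs : Rabs ((phi (lam + h) - phi lam) / h - e1 * P) < m - e1 * P).
  { apply Hdelta; [lra|]. rewrite Rabs_right by lra. lra. }
  apply Rabs_def2 in Habs. lra. }
assert (He1 : 0 < e1) by nra.
assert (Hdl : forall i, (i<p)%nat -> a i * G E - lam <> 0).
{ intros i Hi Hz. apply (Hden lam Hl i Hi). unfold G, E in Hz. lra. }
set (A1 := rsum p (fun i => a i * om i / (a i * G E - lam)^2)).
set (A2 := rsum p (fun i => a i * om i * a i / (a i * G E - lam)^2)).
assert (HA1 : 0 < A1).
{ apply rsum_pos; auto. intros i Hi. apply Rdiv_lt_0_compat.
  apply Rmult_lt_0_compat; auto. apply sq_pos; auto. }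
assert (HQ : is_derive (fun t => rsum p (fun i => a i * om i / (a i * G (e t) - t))) lam (A1 - e1*g1*A2)).
{ eapply is_derive_eq.
  - apply (rsum_derive p (fun i t => a i * om i / (a i * G (e t) - t))
      (fun i => - (a i * om i) * (a i * (e1*g1) - 1) / (a i * G E - lam)^2)).
    intros i Hi. apply (is_derive_cdiv _ (fun t => a i * G (e t) - t)); [| apply Hdl; auto].
    eapply is_derive_eq.
    + apply (is_derive_minus (fun t => a i * G (e t)) (fun t => t)).
      * apply is_derive_scal. exact HX.
      * apply is_derive_id.
    + unfold minus, plus, opp, one; simpl. ring.
  - unfold A1, A2.
    replace (rsum p (fun i => a i * om i / (a i * G E - lam) ^ 2) -
       e1 * g1 * rsum p (fun i => a i * om i * a i / (a i * G E - lam) ^ 2))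
      with (rsum p (fun i => a i * om i / (a i * G E - lam) ^ 2 + (-(e1*g1)) * (a i * om i * a i / (a i * G E - lam) ^ 2)))
      by (rewrite rsum_plus, rsum_scal; ring).
    apply rsum_ext. intros i Hi. field. apply Hdl; auto. }
assert (He' : is_derive e lam (A1 - e1*g1*A2)).
{ apply is_derive_ext_loc with (f := fun t => rsum p (fun i => a i * om i / (a i * G (e t) - t))); auto.
  eapply filter_imp; [|exact Hloc]. intros t Ht. pose proof (HF t Ht) as H. unfold Ffun in H. unfold G. lra. }
assert (Heq : e1 = A1 - e1*g1*A2).
{ pose proof (is_derive_unique e lam e1 He) as U1. pose proof (is_derive_unique e lam _ He') as U2. rewrite U1 in U2. exact U2. }
assert (Hval : 1 - rsum p (fun i => - (a i*om i) * (a i * g1 - 0)/(a i*G E - lam)^2) = 1 + g1 * A2).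
{ unfold A2. rewrite <- rsum_scal. unfold Rminus at 1.
  replace (- rsum p (fun i => - (a i * om i) * (a i * g1 - 0) / (a i * G E - lam) ^ 2))
    with ((-1) * rsum p (fun i => - (a i * om i) * (a i * g1 - 0) / (a i * G E - lam) ^ 2)) by ring.
  rewrite <- rsum_scal. f_equal. apply rsum_ext. intros i Hi. field. apply Hdl; auto. }
exists (1 + g1 * A2). split.
- apply is_derive_Reals. unfold Ffun. fold G.
  eapply is_derive_eq.
  + apply (is_derive_minus (fun x => x) (fun x => rsum p (fun i => a i * om i / (a i * G x - lam)))).
    * apply is_derive_id.
    * apply (rsum_derive p (fun i x => a i*om i/(a i * G x - lam))
         (fun i => - (a i*om i) * (a i * g1 - 0)/(a i*G E - lam)^2)).
      intros i Hi. apply (is_derive_cdiv _ (fun x => a i * G x - lam)); [| apply Hdl; auto].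
      apply (is_derive_minus (fun x => a i * G x) (fun _ => lam)).
      -- apply is_derive_scal. exact HG.
      -- apply (@is_derive_const R_AbsRing R_NormedModule lam).
  + exact Hval.
- nra.
Qed.
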